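(* Let $b>0$ and $h:\mathbb{R}_{\ge0}\to\mathbb{R}$, $h(x)=x$ if $x\le b$ and $h(x)=0$ otherwise. For $j=1,\dots,n$ let $\Theta_j$ be a positive random variable with continuous density $\theta_j$ on $(0,\infty)$ such that $\int_z^\infty\theta_j(y)/y\,dy<\infty$ for all $z>0$, and define for $z>0$ \[ \Omega_j(z)=\int_z^\infty\frac{\theta_j(y)}{y}\,dy-\theta_j(z). \] Let $\mathcal{I}:\mathbb{R}^n_{\ge0}\to\mathbb{R}^n_{>0}$ be differentiable (not necessarily monotone) and define $f_j(p)=\mathbb{E}_{\Theta_j}\big[h(\mathcal{I}_j(p)/\Theta_j)\big]$, $f=(f_1,\dots,f_n)^T$. Then for every $p$, \[ |||\nabla f(p)|||_\infty\le\max_i\big|\Omega_i\big(\mathcal{I}_i(p)/b\big)\big|\ |||\nabla\mathcal{I}(p)|||_\infty . \]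
   Context: Gradient convention: $[\nabla f(p)]_{ij}=\partial f_j(p)/\partial p_i$; $|||A|||_\infty=\max_i\sum_j|A_{ij}|$. *)

(* Defs.v *)
From Stdlib Require Import Reals Lra Lia.
Open Scope R_scope.

Definition hfun (b x : R) : R := if Rle_dec x b then x else 0.

(* Vectors of R^n are represented as nat -> R, only indices k < n matter. *)
Definition in_dom (n : nat) (p : nat -> R) : Prop :=
  forall k, (k < n)%nat -> 0 <= p k.

Definition upd (p : nat -> R) (i : nat) (t : R) : nat -> R :=
  fun k => if Nat.eqb k i then p k + t else p k.

(* partial derivative of F w.r.t. coordinate i at p equals l, the limit being
   taken within the domain R^n_{>=0} (one-sided on the boundary). *)
Definition partial_at (n : nat) (F : (nat -> R) -> R) (p : nat -> R) (i : nat) (l : R) : Prop :=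
  forall eps, 0 < eps -> exists delta, 0 < delta /\
    forall t, t <> 0 -> Rabs t < delta -> in_dom n (upd p i t) ->
      Rabs ((F (upd p i t) - F p) / t - l) < eps.

Definition improper_int_inf (g : R -> R) (z l : R) : Prop :=
  (forall M, z <= M -> inhabited (Riemann_integrable g z M)) /\
  forall eps, 0 < eps -> exists M0, forall M (pr : Riemann_integrable g z M),
    z <= M -> M0 <= M -> Rabs (RiemannInt pr - l) < eps.

Definition improper_int_0_inf (g : R -> R) (l : R) : Prop :=
  (forall a M, 0 < a -> a <= M -> inhabited (Riemann_integrable g a M)) /\
  forall eps, 0 < eps -> exists delta, 0 < delta /\ exists M0,
    forall a M (pr : Riemann_integrable g a M),
      0 < a -> a < delta -> a <= M -> M0 <= M -> Rabs (RiemannInt pr - l) < eps.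

Fixpoint sumR (n : nat) (f : nat -> R) : R :=
  match n with O => 0 | S k => sumR k f + f k end.

(* max_{i<n} f i  (0 for n = 0; only applied to nonnegative quantities) *)
Fixpoint maxR (n : nat) (f : nat -> R) : R :=
  match n with O => 0 | S k => Rmax (maxR k f) (f k) end.

Definition row_sum_norm (n : nat) (A : nat -> nat -> R) : R :=
  maxR n (fun i => sumR n (fun j => Rabs (A i j))).

(* Main.v *)
Require Import Defs.
From Stdlib Require Import Reals Lra Lia.
From Coquelicot Require Import Coquelicot.
Open Scope R_scope.

Lemma eq_by_eps (x y : R) : (forall e, 0 < e -> Rabs (x - y) < e) -> x = y.
Proof.
  intros H. destruct (Req_dec x y) as [|Hn]; auto.
  assert (Hp : 0 < Rabs (x - y)) by (apply Rabs_pos_lt; lra).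
  specialize (H _ Hp). lra.
Qed.

Lemma iinf_RInt g z l : improper_int_inf g z l ->
  (forall M, z <= M -> ex_RInt g z M) /\
  forall eps, 0 < eps -> exists M0, forall M, z <= M -> M0 <= M -> Rabs (RInt g z M - l) < eps.
Proof.
  intros [H1 H2]. split.
  - intros M HM; destruct (H1 M HM) as [pr]; apply ex_RInt_Reals_1; exact pr.
  - intros eps He; destruct (H2 eps He) as [M0 HM0]; exists M0; intros M Hz HM.
    destruct (H1 M Hz) as [pr]; rewrite (RInt_Reals _ _ _ pr); apply HM0; auto.
Qed.

Lemma i0inf_RInt g l : improper_int_0_inf g l ->
  (forall a M, 0 < a -> a <= M -> ex_RInt g a M) /\
  forall eps, 0 < eps -> exists delta, 0 < delta /\ exists M0,
    forall a M, 0 < a -> a < delta -> a <= M -> M0 <= M -> Rabs (RInt g a M - l) < eps.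
Proof.
  intros [H1 H2]. split.
  - intros a M Ha HM; destruct (H1 a M Ha HM) as [pr]; apply ex_RInt_Reals_1; exact pr.
  - intros eps He; destruct (H2 eps He) as [d [Hd [M0 HM0]]]; exists d; split; auto; exists M0.
    intros a M Ha Had Hz HM.
    destruct (H1 a M Ha Hz) as [pr]; rewrite (RInt_Reals _ _ _ pr); apply HM0; auto.
Qed.

Section G.
Variable g G : R -> R.
Hypothesis HG : forall z, 0 < z -> improper_int_inf g z (G z).

Lemma G_diff z w : 0 < z -> z <= w -> G z = RInt g z w + G w.
Proof.
  intros Hz Hzw.
  destruct (iinf_RInt _ _ _ (HG z Hz)) as [Ez Lz].
  destruct (iinf_RInt _ _ _ (HG w ltac:(lra))) as [Ew Lw].
  apply eq_by_eps; intros e He.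
  destruct (Lz (e/2) ltac:(lra)) as [M1 H1].
  destruct (Lw (e/2) ltac:(lra)) as [M2 H2].
  set (M := Rmax w (Rmax M1 M2)).
  assert (Hw : w <= M) by apply Rmax_l.
  assert (HM1 : M1 <= M) by (unfold M; eapply Rle_trans; [apply Rmax_l| apply Rmax_r]).
  assert (HM2 : M2 <= M) by (unfold M; eapply Rle_trans; [apply Rmax_r| apply Rmax_r]).
  specialize (H1 M ltac:(lra) HM1). specialize (H2 M Hw HM2).
  assert (HC := RInt_Chasles g z w M (Ez w Hzw) (Ew M Hw)).
  change (RInt g z w + RInt g w M = RInt g z M) in HC.
  apply Rabs_def2 in H1; apply Rabs_def2 in H2. apply Rabs_def1; lra.
Qed.

Lemma G_loc z0 w : 0 < z0 -> 0 < w -> G w = G z0 - RInt g z0 w.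
Proof.
  intros H0 Hw. destruct (Rle_lt_dec z0 w) as [Hle|Hlt].
  - rewrite (G_diff z0 w H0 Hle). ring.
  - rewrite (G_diff w z0 Hw ltac:(lra)).
    destruct (iinf_RInt _ _ _ (HG w Hw)) as [Ew _].
    rewrite <- (opp_RInt_swap g w z0 (Ew z0 ltac:(lra))).
    change (opp (RInt g w z0)) with (- RInt g w z0). ring.
Qed.

Lemma ex_RInt_pos z0 w : 0 < z0 -> 0 < w -> ex_RInt g z0 w.
Proof.
  intros H0 Hw. destruct (Rle_lt_dec z0 w) as [Hle|Hlt].
  - destruct (iinf_RInt _ _ _ (HG z0 H0)) as [E _]; auto.
  - destruct (iinf_RInt _ _ _ (HG w Hw)) as [E _]; apply ex_RInt_swap; apply E; lra.
Qed.
End G.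

Lemma chain (S : R -> Prop) (u : R -> R) u0 (Phi : R -> R) D L :
 (forall eps, 0 < eps -> exists d, 0 < d /\ forall t, t <> 0 -> Rabs t < d -> S t ->
     Rabs ((u t - u0) / t - D) < eps) ->
 derivable_pt_lim Phi u0 L ->
 forall eps, 0 < eps -> exists d, 0 < d /\ forall t, t <> 0 -> Rabs t < d -> S t ->
     Rabs ((Phi (u t) - Phi u0) / t - L * D) < eps.
Proof.
  intros Hu HP eps He.
  assert (HL := Rabs_pos L). assert (HD := Rabs_pos D).
  set (e1 := Rmin 1 (eps / (2 * (Rabs L + 1)))).
  assert (He1 : 0 < e1).
  { unfold e1; apply Rmin_glb_lt; [lra|apply Rdiv_lt_0_compat; lra]. }
  assert (He1a : e1 <= 1) by apply Rmin_l.
  assert (He1b : Rabs L * e1 < eps / 2).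
  { apply Rle_lt_trans with (Rabs L * (eps / (2 * (Rabs L + 1)))).
    - apply Rmult_le_compat_l; auto; apply Rmin_r.
    - assert (Rabs L * (eps / (2 * (Rabs L + 1))) = eps/2 - eps / (2 * (Rabs L + 1)))
        by (field; lra).
      assert (0 < eps / (2 * (Rabs L + 1))) by (apply Rdiv_lt_0_compat; lra). lra. }
  set (e2 := eps / (2 * (Rabs D + 1))).
  assert (He2 : 0 < e2) by (apply Rdiv_lt_0_compat; lra).
  destruct (Hu e1 He1) as [d1 [Hd1 H1]].
  destruct (HP e2 He2) as [d2 H2].
  exists (Rmin d1 (d2 / (Rabs D + 1))). split.
  { apply Rmin_glb_lt; auto. apply Rdiv_lt_0_compat; [apply cond_pos|lra]. }
  intros t Ht Hta HS.
  assert (Htd1 : Rabs t < d1) by (eapply Rlt_le_trans; [exact Hta| apply Rmin_l]).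
  assert (Htd2 : Rabs t < d2 / (Rabs D + 1)) by (eapply Rlt_le_trans; [exact Hta| apply Rmin_r]).
  specialize (H1 t Ht Htd1 HS).
  set (q := (u t - u0) / t) in *.
  assert (Hq : Rabs q <= Rabs D + 1).
  { replace q with ((q - D) + D) by ring.
    eapply Rle_trans; [apply Rabs_triang|]. lra. }
  destruct (Req_dec (u t) u0) as [Heq|Hne].
  - rewrite Heq. unfold q in H1. rewrite Heq in H1.
    replace ((u0 - u0) / t - D) with (- D) in H1 by (field; auto).
    rewrite Rabs_Ropp in H1.
    replace ((Phi u0 - Phi u0) / t - L * D) with (- (L * D)) by (field; auto).
    rewrite Rabs_Ropp, Rabs_mult.
    assert (Rabs L * Rabs D <= Rabs L * e1) by (apply Rmult_le_compat_l; lra). lra.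
  - set (h := u t - u0).
    assert (Hh : h <> 0) by (unfold h; lra).
    assert (Hha : Rabs h < d2).
    { assert (h = q * t) by (unfold h, q; field; auto).
      rewrite H, Rabs_mult.
      apply Rle_lt_trans with ((Rabs D + 1) * Rabs t).
      - apply Rmult_le_compat_r; auto. apply Rabs_pos.
      - assert ((Rabs D + 1) * (d2 / (Rabs D + 1)) = d2) by (field; lra).
        assert ((Rabs D + 1) * Rabs t < (Rabs D + 1) * (d2 / (Rabs D + 1)))
          by (apply Rmult_lt_compat_l; lra). lra. }
    specialize (H2 h Hh Hha).
    replace (u0 + h) with (u t) in H2 by (unfold h; ring).
    set (r := (Phi (u t) - Phi u0) / h) in *.
    replace ((Phi (u t) - Phi u0) / t - L * D) with ((r - L) * q + L * (q - D))
      by (unfold r, q, h; field; split; auto).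
    eapply Rle_lt_trans; [apply Rabs_triang|]. rewrite !Rabs_mult.
    assert (Rabs (r - L) * Rabs q <= Rabs (r - L) * (Rabs D + 1))
      by (apply Rmult_le_compat_l; auto; apply Rabs_pos).
    assert (Rabs (r - L) * (Rabs D + 1) < e2 * (Rabs D + 1))
      by (apply Rmult_lt_compat_r; lra).
    assert (e2 * (Rabs D + 1) = eps / 2) by (unfold e2; field; lra).
    assert (Rabs L * Rabs (q - D) <= Rabs L * e1)
      by (apply Rmult_le_compat_l; lra).
    lra.
Qed.

Lemma maxR_ge n f k : (k < n)%nat -> f k <= maxR n f.
Proof.
  induction n; intros Hk; [lia|]. simpl.
  destruct (Nat.eq_dec k n) as [->|Hne]; [apply Rmax_r|].
  eapply Rle_trans; [apply IHn; lia| apply Rmax_l].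
Qed.

Lemma maxR_nonneg n f : 0 <= maxR n f.
Proof. induction n; simpl; [lra|]. eapply Rle_trans; [exact IHn|apply Rmax_l]. Qed.

Lemma maxR_le n f c : 0 <= c -> (forall k, (k < n)%nat -> f k <= c) -> maxR n f <= c.
Proof.
  induction n; intros Hc H; simpl; auto.
  apply Rmax_lub; [apply IHn; auto|apply H; lia].
Qed.

Lemma sumR_le n f g : (forall k, (k < n)%nat -> f k <= g k) -> sumR n f <= sumR n g.
Proof.
  induction n; intros H; simpl; [lra|].
  assert (sumR n f <= sumR n g) by (apply IHn; auto).
  assert (f n <= g n) by (apply H; lia). lra.
Qed.

Lemma sumR_scal n c f : sumR n (fun k => c * f k) = c * sumR n f.
Proof. induction n; simpl; [ring|]. rewrite IHn; ring. Qed.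

Lemma Phi_deriv (th G : R -> R) b x0 : 0 < b -> 0 < x0 ->
  (forall z, 0 < z -> improper_int_inf (fun y => th y / y) z (G z)) ->
  continuity_pt th (x0/b) ->
  derivable_pt_lim (fun x => x * G (x/b)) x0 (G (x0/b) - th (x0/b)).
Proof.
  intros Hb Hx0 HG Hc.
  set (g := fun y => th y / y) in *.
  set (z0 := x0 / b).
  assert (Hz0 : 0 < z0) by (unfold z0; apply Rdiv_lt_0_compat; lra).
  assert (Hgc : continuous g z0).
  { apply continuity_pt_filterlim. unfold g.
    apply (continuity_pt_div th (fun y => y)); auto.
    apply derivable_continuous_pt. apply derivable_pt_id. lra. }
  assert (HR : is_derive (RInt g z0) z0 (g z0)).
  { apply is_derive_RInt with (a := z0); auto.
    apply (filter_imp (fun w => 0 < w)).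
    - intros w Hw. apply RInt_correct. apply (ex_RInt_pos g G HG); auto.
    - apply (open_gt 0); auto. }
  apply is_derive_Reals in HR.
  assert (Hd : is_derive (fun x => x/b) x0 (/b)).
  { auto_derive. auto. field. lra. }
  apply is_derive_Reals in Hd.
  assert (HC := derivable_pt_lim_comp (fun x => x/b) (RInt g z0) x0 _ _ Hd HR).
  assert (HM := derivable_pt_lim_minus (fct_cte (G z0)) _ x0 _ _ (derivable_pt_lim_const (G z0) x0) HC).
  assert (HP := derivable_pt_lim_mult id _ x0 _ _ (derivable_pt_lim_id x0) HM).
  apply is_derive_Reals in HP.
  apply is_derive_Reals.
  match type of HP with is_derive _ _ ?l => replace (G z0 - th z0) with l end.
  2:{ unfold minus_fct, fct_cte, comp, id. fold z0.
      replace (RInt g z0 z0) with 0.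
      2:{ rewrite RInt_point. reflexivity. }
      unfold g, z0. field. lra. }
  eapply is_derive_ext_loc; [|exact HP].
  - apply (filter_imp (fun w => 0 < w)).
    + intros w Hw. unfold mult_fct, minus_fct, fct_cte, comp, id.
      rewrite (G_loc g G HG z0 (w/b)); auto. apply Rdiv_lt_0_compat; lra.
    + apply (open_gt 0); auto.
Qed.

Lemma F_ident (th G : R -> R) b x Fv : 0 < b -> 0 < x ->
  (forall z, 0 < z -> improper_int_inf (fun y => th y / y) z (G z)) ->
  improper_int_0_inf (fun y => hfun b (x / y) * th y) Fv ->
  Fv = x * G (x / b).
Proof.
  intros Hb Hx HG HF.
  set (z := x / b).
  assert (Hz : 0 < z) by (unfold z; apply Rdiv_lt_0_compat; lra).
  destruct (i0inf_RInt _ _ HF) as [EF LF].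
  destruct (iinf_RInt _ _ _ (HG z Hz)) as [Eg Lg].
  apply eq_by_eps; intros e He.
  destruct (LF (e/2) ltac:(lra)) as [d [Hd [M0 HM0]]].
  destruct (Lg (e/(2*x))) as [M1 HM1].
  { apply Rdiv_lt_0_compat; lra. }
  set (a := Rmin (d/2) (z/2)).
  assert (Ha : 0 < a) by (unfold a; apply Rmin_glb_lt; lra).
  assert (Haz : a < z) by (unfold a; eapply Rle_lt_trans; [apply Rmin_r|lra]).
  assert (Had : a < d) by (unfold a; eapply Rle_lt_trans; [apply Rmin_l|lra]).
  set (M := Rmax z (Rmax M0 M1)).
  assert (Hw : z <= M) by apply Rmax_l.
  assert (H0' : M0 <= M) by (unfold M; eapply Rle_trans; [apply Rmax_l| apply Rmax_r]).
  assert (H1' : M1 <= M) by (unfold M; eapply Rle_trans; [apply Rmax_r| apply Rmax_r]).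
  specialize (HM0 a M Ha Had ltac:(lra) H0').
  specialize (HM1 M Hw H1').
  assert (EaM := EF a M Ha ltac:(lra)).
  assert (Eaz := ex_RInt_Chasles_1 _ a z M ltac:(lra) EaM).
  assert (EzM := ex_RInt_Chasles_2 _ a z M ltac:(lra) EaM).
  assert (HC := RInt_Chasles _ a z M Eaz EzM).
  change (plus ?u ?v) with (u + v) in HC.
  assert (H1 : RInt (fun y => hfun b (x / y) * th y) a z = 0).
  { rewrite (RInt_ext _ (fun _ => 0)).
    - rewrite RInt_const. apply (@scal_zero_r R_Ring R_ModuleSpace).
    - intros y Hy. rewrite Rmin_left in Hy by lra. rewrite Rmax_right in Hy by lra.
      cbv beta; unfold hfun. destruct (Rle_dec (x / y) b) as [Hle|]; [|apply Rmult_0_l].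
      exfalso.
      assert (b * y < x).
      { apply Rlt_le_trans with (b * z). apply Rmult_lt_compat_l; lra.
        unfold z; right; field; lra. }
      assert (x / y - b = (x - b * y) / y) by (field; lra).
      assert (0 < (x - b * y) / y) by (apply Rdiv_lt_0_compat; lra). lra. }
  assert (H2 : RInt (fun y => hfun b (x / y) * th y) z M = x * RInt (fun y => th y / y) z M).
  { rewrite (RInt_ext _ (fun y => scal x (th y / y))).
    - exact (RInt_scal (V:=R_CompleteNormedModule) (fun y => th y / y) z M x (Eg M Hw)).
    - intros y Hy. rewrite Rmin_left in Hy by lra. rewrite Rmax_right in Hy by lra.
      cbv beta. change (scal x (th y / y)) with (x * (th y / y)).
      match goal with |- ?u = ?v => change (@eq R u v) end. unfold hfun.
      destruct (Rle_dec (x / y) b) as [Hle|Hn].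
      + field. lra.
      + exfalso. apply Hn.
        assert (x <= b * y).
        { apply Rle_trans with (b * z). unfold z; right; field; lra.
          apply Rmult_le_compat_l; lra. }
        assert (b - x / y = (b * y - x) / y) by (field; lra).
        assert (0 <= (b * y - x) / y) by (apply Rdiv_le_0_compat; lra). lra. }
  rewrite H1, H2 in HC.
  apply Rabs_def2 in HM0; apply Rabs_def2 in HM1.
  assert (Hx1 : x * (e / (2 * x)) = e/2) by (field; lra).
  assert (Hm1 : x * (RInt (fun y => th y / y) z M - G z) < e/2).
  { rewrite <- Hx1. apply Rmult_lt_compat_l; lra. }
  assert (Hm2 : - (e/2) < x * (RInt (fun y => th y / y) z M - G z)).
  { assert (x * (- (e / (2 * x))) < x * (RInt (fun y => th y / y) z M - G z)).
    { apply Rmult_lt_compat_l; lra. }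
    assert (x * (- (e / (2 * x))) = - (e/2)) by (field; lra). lra. }
  apply Rabs_def1; lra.
Qed.

Theorem mainTheorem6 (n : nat) (b : R) (theta Om : nat -> R -> R)
  (I F : (nat -> R) -> nat -> R) (p : nat -> R) (dI : nat -> nat -> R) :
  0 < b ->
  (* theta_j : continuous probability density on (0, oo) *)
  (forall j, (j < n)%nat -> forall y, 0 < y -> continuity_pt (theta j) y) ->
  (forall j, (j < n)%nat -> forall y, 0 < y -> 0 <= theta j y) ->
  (forall j, (j < n)%nat -> improper_int_0_inf (theta j) 1) ->
  (* int_z^oo theta_j(y)/y dy is finite and Om_j(z) = that integral - theta_j(z) *)
  (forall j, (j < n)%nat -> forall z, 0 < z ->
     improper_int_inf (fun y => theta j y / y) z (Om j z + theta j z)) ->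
  (* I : R^n_{>=0} -> R^n_{>0}, differentiable *)
  (forall q, in_dom n q -> forall j, (j < n)%nat -> 0 < I q j) ->
  (forall q, in_dom n q -> forall i j, (i < n)%nat -> (j < n)%nat ->
     exists l, partial_at n (fun r => I r j) q i l) ->
  (* f_j(q) = E[h(I_j(q)/Theta_j)] *)
  (forall q, in_dom n q -> forall j, (j < n)%nat ->
     improper_int_0_inf (fun y => hfun b (I q j / y) * theta j y) (F q j)) ->
  in_dom n p ->
  (* dI i j = d I_j / d p_i at p *)
  (forall i j, (i < n)%nat -> (j < n)%nat -> partial_at n (fun r => I r j) p i (dI i j)) ->
  exists D : nat -> nat -> R,
    (forall i j, (i < n)%nat -> (j < n)%nat -> partial_at n (fun r => F r j) p i (D i j)) /\
    row_sum_norm n D <= maxR n (fun i => Rabs (Om i (I p i / b))) * row_sum_norm n dI.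
Proof.
  intros Hb Hcont _ _ Hint Hpos _ HF Hp HdI.
  exists (fun i j => Om j (I p j / b) * dI i j). split.
  - intros i j Hi Hj.
    assert (Hx0 := Hpos p Hp j Hj).
    assert (HPhi := Phi_deriv (theta j) (fun z => Om j z + theta j z) b (I p j) Hb Hx0
                      (Hint j Hj) (Hcont j Hj _ (Rdiv_lt_0_compat _ _ Hx0 Hb))).
    assert (Hc := chain (fun t => in_dom n (upd p i t)) (fun t => I (upd p i t) j) (I p j)
                   _ (dI i j) _ (HdI i j Hi Hj) HPhi).
    intros eps He. destruct (Hc eps He) as [d [Hd H]]. exists d; split; auto.
    intros t Ht Hta HS. specialize (H t Ht Hta HS). cbv beta in H.
    rewrite (F_ident (theta j) (fun z => Om j z + theta j z) b (I (upd p i t) j) _ Hb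
              (Hpos _ HS j Hj) (Hint j Hj) (HF _ HS j Hj)).
    rewrite (F_ident (theta j) (fun z => Om j z + theta j z) b (I p j) _ Hb
              Hx0 (Hint j Hj) (HF _ Hp j Hj)).
    replace (Om j (I p j / b) + theta j (I p j / b) - theta j (I p j / b))
      with (Om j (I p j / b)) in H by ring.
    exact H.
  - set (m := maxR n (fun i => Rabs (Om i (I p i / b)))).
    assert (Hm : 0 <= m) by apply maxR_nonneg.
    assert (Hr : 0 <= row_sum_norm n dI) by apply maxR_nonneg.
    unfold row_sum_norm at 1. apply maxR_le; [apply Rmult_le_pos; auto|].
    intros i Hi.
    apply Rle_trans with (sumR n (fun j => m * Rabs (dI i j))).
    + apply sumR_le. intros j Hj. rewrite Rabs_mult.
      apply Rmult_le_compat_r; [apply Rabs_pos|].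
      apply (maxR_ge n (fun i => Rabs (Om i (I p i / b))) j Hj).
    + rewrite sumR_scal. apply Rmult_le_compat_l; auto.
      apply (maxR_ge n (fun i => sumR n (fun j => Rabs (dI i j))) i Hi).
Qed.
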